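(* Let $\Delta$ be a quasi-tree on $[n]$ of dimension $d-1$, and let $\ell$ be a nonnegative integer with $\ell\leq d-1$. Let $I\subset S=K[x_1,\ldots,x_n]$ ($K$ a field) be the ideal generated by all monomials $x_F=\prod_{i\in F}x_i$ where $F$ ranges over the $(\ell+1)$-element subsets of $[n]$ with $F\notin\Delta$ (the facet ideal of $\overline{\mathrm{skel}_\Delta(\ell)}$). Then $I$ has linear quotients. In particular, $I$ has a linear resolution.
   Context: A simplicial complex on $[n]$ is a collection of subsets of $[n]$ containing all singletons and closed under taking subsets; facets are maximal faces. A facet $F$ is a leaf if either it is the only facet, or there is a facet $G\neq F$ with $H\cap F\subseteq G\cap F$ for every facet $H\neq F$. $\Delta$ is a quasi-tree if its facets can be labeled $F_1,\ldots,F_m$ so that each $F_i$ is a leaf of the complex generated by $F_1,\ldots,F_i$. $\mathrm{skel}_\Delta(\ell)$ is the complex whose facets are the $\ell$-dimensional faces of $\Delta$; for a pure $(e-1)$-dimensional complex $\Gamma$, $\bar\Gamma$ is generated by the $e$-subsets of $[n]$ not in $\Gamma$. A monomial ideal $I$ has linear quotients if its minimal monomial generators can be ordered $f_1,\ldots,f_m$ such that for every $i>1$ the colon ideal $(f_1,\ldots,f_{i-1}):f_i$ is generated by variables. A graded ideal generated in degree $q$ has a linear resolution if the $i$-th module of its minimal graded free resolution is generated in degree $q+i$ for all $i$. *)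

(* Defs.v *)
From HB Require Import structures.
From mathcomp Require Import all_boot all_order all_algebra.
From mathcomp Require Import mpoly.
Set Implicit Arguments. Unset Strict Implicit. Unset Printing Implicit Defensive.
Import GRing.Theory.
Local Open Scope ring_scope.

Definition simplicial_complex (n : nat) (D : {set {set 'I_n}}) : Prop :=
  (forall i : 'I_n, [set i] \in D) /\
  (forall F G : {set 'I_n}, F \in D -> G \subset F -> G \in D).

Definition facets (n : nat) (D : {set {set 'I_n}}) : {set {set 'I_n}} :=
  [set F in D | [forall G in D, (F \subset G) ==> (G == F)]].

(** dimension d-1 : maximal face cardinality is d *)
Definition max_face_card (n : nat) (D : {set {set 'I_n}}) : nat :=
  \max_(F in D) #|F|.

Definition is_leaf (n : nat) (Fs : {set {set 'I_n}}) (F : {set 'I_n}) : Prop :=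
  F \in Fs /\
  (Fs = [set F] \/
   exists2 G, (G \in Fs) /\ G != F &
     forall H, H \in Fs -> H != F -> H :&: F \subset G :&: F).

Definition gen_facets (n : nat) (Fs : {set {set 'I_n}}) : {set {set 'I_n}} :=
  [set F in Fs | [forall G in Fs, (F \subset G) ==> (G == F)]].

Definition quasi_tree (n : nat) (D : {set {set 'I_n}}) : Prop :=
  exists s : seq {set 'I_n},
    [/\ uniq s,
        (forall F, F \in s <-> F \in facets D) &
        forall i, (i < size s)%N ->
          is_leaf (gen_facets [set F in take i.+1 s]) (nth set0 s i)].

Definition xmon (K : fieldType) (n : nat) (F : {set 'I_n}) : {mpoly K[n]} :=
  \prod_(i in F) 'X_i.

Definition in_ideal (R : comNzRingType) (G : seq R) (p : R) : Prop :=
  exists c : seq R, size c = size G /\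
    p = \sum_(j < size G) c`_j * G`_j.

Definition linear_quotients_order (K : fieldType) (n : nat)
    (gs : seq {mpoly K[n]}) : Prop :=
  forall i, (0 < i < size gs)%N ->
    exists V : seq 'I_n, forall g : {mpoly K[n]},
      in_ideal (take i gs) (g * gs`_i) <->
      in_ideal [seq 'X_j | j <- V] g.

(* Main.v *)
Require Import Defs.
From HB Require Import structures.
From mathcomp Require Import all_boot all_order all_algebra.
From mathcomp Require Import mpoly.
Set Implicit Arguments. Unset Strict Implicit. Unset Printing Implicit Defensive.

Definition good (n : nat) (s : seq {set 'I_n}) : Prop :=
  forall j, (j < size s)%N -> forall B, B \in take j s ->
    exists2 k, k \in B :\: nth set0 s j &
      exists2 C, C \in take j s & C :\: nth set0 s j = [set k].

Definition dclosed (n : nat) (P : {set 'I_n} -> bool) : Prop :=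
  forall A B : {set 'I_n}, P A -> B \subset A -> P B.

Definition simpl (n : nat) (P : {set 'I_n} -> bool) (U : {set 'I_n}) (w : 'I_n) : Prop :=
  forall A B : {set 'I_n}, A \subset U -> B \subset U -> w \in A -> w \in B -> P A -> P B -> P (A :|: B).

Lemma good_small (n : nat) (s : seq {set 'I_n}) : (size s <= 1)%N -> good s.
Proof.
move=> hs j hj B; have -> : j = 0%N by move: hj hs; case: j => // j; case: s => //= ? [].
by rewrite take0.
Qed.

Lemma good_cat (n : nat) (s1 s2 : seq {set 'I_n}) : good s1 -> good s2 ->
  (forall A B, A \in s2 -> B \in s1 -> exists2 k, k \in B :\: A &
     exists2 C, C \in s1 & C :\: A = [set k]) -> good (s1 ++ s2).
Proof.
move=> g1 g2 cr j; rewrite size_cat => hj B.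
case: (ltnP j (size s1)) => hj1.
  by rewrite take_cat hj1 nth_cat hj1; apply: g1.
rewrite take_cat ltnNge hj1 /= nth_cat ltnNge hj1 /= mem_cat => /orP [] hB.
  have hA : nth set0 s2 (j - size s1) \in s2 by apply: mem_nth; rewrite ltn_subLR // addnC.
  have [k hk [C hC hCk]] := cr _ _ hA hB.
  by exists k => //; exists C => //; rewrite mem_cat hC.
have hj2 : (j - size s1 < size s2)%N by rewrite ltn_subLR // addnC.
have [k hk [C hC hCk]] := g2 _ hj2 _ hB.
by exists k => //; exists C => //; rewrite mem_cat hC orbT.
Qed.

Lemma good_map (n : nat) (w : 'I_n) (t : seq {set 'I_n}) : good t ->
  (forall B, B \in t -> w \notin B) -> good [seq w |: B | B <- t].
Proof.
move=> g hw j; rewrite size_map => hj B.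
rewrite -map_take (nth_map set0) // => /mapP [B0 hB0 ->].
have [k hk [C0 hC0 hCk]] := g _ hj _ hB0.
have hwB0 := hw _ (mem_take hB0).
have hwC0 := hw _ (mem_take hC0).
exists k.
  have kw : k != w by apply/eqP => ekw; move: hk hwB0; rewrite ekw !inE => /andP [_ ->].
  by move: hk; rewrite !inE (negPf kw) /=.
exists (w |: C0); first exact: map_f.
rewrite -hCk; apply/setP => y; rewrite !inE.
by case: (eqVneq y w) => [->|] /=; rewrite ?(negPf hwC0) ?andbF.
Qed.

Definition spec (n : nat) (U : {set 'I_n}) (P : {set 'I_n} -> bool) (e : nat)
  (s : seq {set 'I_n}) : Prop :=
  [/\ uniq s, (forall A, A \in s <-> [/\ A \subset U, #|A| = e & ~~ P A]) & good s].

Lemma spec_e0 (n : nat) (U : {set 'I_n}) P : exists s, spec U P 0 s.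
Proof.
case hP: (P set0).
  exists [::]; split; [by []| |by apply: good_small].
  move=> A; split => //; case=> _ /cards0_eq ->; by rewrite hP.
exists [:: set0]; split; [by []| |by apply: good_small].
move=> A; rewrite inE; split.
  by move/eqP ->; rewrite sub0set cards0 hP.
by case=> _ /cards0_eq ->.
Qed.

Lemma spec_U0 (n : nat) P e : exists s, spec (set0 : {set 'I_n}) P e.+1 s.
Proof.
exists [::]; split; [by []| |by apply: good_small].
by move=> A; split => //; case; rewrite subset0 => /eqP -> ; rewrite cards0.
Qed.

Lemma exists_good (n : nat) m : forall (U : {set 'I_n}) P e, (#|U| <= m)%N -> dclosed P ->
  (forall U' : {set 'I_n}, U' \subset U -> U' != set0 -> exists2 w, w \in U' & simpl P U' w) ->
  exists s, spec U P e s.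
Proof.
elim: m => [|m IH] U P [|e] hU dP ch; try exact: spec_e0.
  by move: hU; rewrite leqn0 => /eqP /cards0_eq ->; apply: spec_U0.
case: (eqVneq U set0) => [->|Un0]; first exact: spec_U0.
have [w wU sw] := ch U (subxx U) Un0.
have hU1 : (#|U :\ w| <= m)%N by move: hU; rewrite (cardsD1 w U) wU.
have sU1 : U :\ w \subset U by apply: subD1set.
have [t [ut mt gt]] : exists t, spec (U :\ w) (fun A => P (w |: A)) e t.
  apply: IH => //.
    by move=> A B hA hB; apply: (dP _ _ hA); apply: setUS.
  move=> U' hU' /set0Pn [w' hw']; exists w' => // A B hA hB _ _ pA pB.
  have := sw _ _ _ _ _ _ pA pB.
  have -> : (w |: A) :|: (w |: B) = w |: (A :|: B).
    by apply/setP => z; rewrite !inE; case: (z == w).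
  apply.
  - by rewrite subUset sub1set wU (subset_trans hA (subset_trans hU' sU1)).
  - by rewrite subUset sub1set wU (subset_trans hB (subset_trans hU' sU1)).
  - by rewrite setU11.
  - by rewrite setU11.
have [s2 [us2 ms2 gs2]] : exists s2, spec (U :\ w) P e.+1 s2.
  apply: IH => // U' hU' nU'; apply: ch => //; exact: subset_trans hU' sU1.
have wt : forall B, B \in t -> w \notin B.
  by move=> B /mt [hB _ _]; move: hB; rewrite subsetD1 => /andP [].
have ws2 : forall B, B \in s2 -> w \notin B.
  by move=> B /ms2 [hB _ _]; move: hB; rewrite subsetD1 => /andP [].
exists ([seq w |: B | B <- t] ++ s2); split.
- rewrite cat_uniq us2 andbT; apply/andP; split.
    rewrite map_inj_in_uniq // => A B hA hB eAB.
    by rewrite -(setU1K (wt _ hA)) eAB setU1K // wt.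
  apply/hasPn => A /ws2 wA; apply/mapP => [[B _ eAB]]; move: wA; by rewrite eAB setU11.
- move=> A; rewrite mem_cat; split.
    case/orP => [/mapP [B hB ->]|].
      have [hB1 hB2 hB3] := (mt B).1 hB.
      split => //; last by rewrite cardsU1 (wt _ hB) hB2.
      by rewrite subUset sub1set wU (subset_trans hB1 sU1).
    by move/ms2 => [h1 h2 h3]; split => //; apply: subset_trans h1 sU1.
  case=> h1 h2 h3; case: (boolP (w \in A)) => wA.
    apply/orP; left; apply/mapP; exists (A :\ w); last by rewrite setD1K.
    apply/mt; split.
    - by rewrite setSD.
    - by move: h2; rewrite (cardsD1 w A) wA => [[]].
    - by rewrite setD1K.
  by apply/orP; right; apply/ms2; split => //; rewrite subsetD1 h1.
- apply: good_cat => //; first exact: good_map.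
  move=> A B hA /mapP [B0 hB0 ->].
  have [hA1 hA2 hA3] := (ms2 A).1 hA.
  have [hB1 hB2 hB3] := (mt B0).1 hB0.
  have wA := ws2 _ hA.
  have [x xA hx] : exists2 x, x \in A & ~~ P (w |: (A :\ x)).
    case: (boolP [exists x in A, ~~ P (w |: (A :\ x))]) => [/exists_inP [x ? ?]|/exists_inPn H].
      by exists x.
    have [x xA] : exists x, x \in A by apply/set0Pn; apply/eqP => A0; move: hA2; rewrite A0 cards0.
    case: e hA2 hB2 hB3 {mt ms2 hA gt us2 ut t wt hB0 gs2 hB1 s2 ws2 IH} => [|e] hA2 hB2 hB3.
      have A0 : A :\ x = set0 by apply: cards0_eq; move: hA2; rewrite (cardsD1 x A) xA => [[]].
      by move: (H x xA) hB3; rewrite negbK A0 (cards0_eq hB2) => ->.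
    have [y yA] : exists y, y \in A :\ x.
      apply/set0Pn; apply/eqP => A0; move: hA2; rewrite (cardsD1 x A) xA A0 cards0.
      by [].
    have yx : y != x by move: yA; rewrite !inE => /andP [].
    have yA' : y \in A by move: yA; rewrite !inE => /andP [].
    have AU : A \subset U by apply: subset_trans hA1 sU1.
    have := sw (w |: (A :\ x)) (w |: (A :\ y)).
    have -> : (w |: (A :\ x)) :|: (w |: (A :\ y)) = w |: A.
      apply/setP => z; rewrite !inE; case: (eqVneq z w) => //= _.
      case: (z \in A); rewrite ?andbT ?andbF //=.
      by case: (eqVneq z x) => [->|] //=; rewrite eq_sym yx.
    have sub' : forall z, w |: (A :\ z) \subset U.
      by move=> z; rewrite subUset sub1set wU (subset_trans (subD1set A z) AU).
    move=> /(_ (sub' x) (sub' y) (setU11 _ _) (setU11 _ _)).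
    move=> /(_ (negbNE (H x xA)) (negbNE (H y yA'))) PA.
    by move: hA3; rewrite (dP _ _ PA (subsetUr _ _)).
  exists w; first by rewrite !inE eqxx /= (negPf wA).
  exists (w |: (A :\ x)).
    apply/mapP; exists (A :\ x) => //; apply/mt; split => //.
      by apply: subset_trans (subD1set A x) hA1.
    by move: hA2; rewrite (cardsD1 x A) xA => [[]].
  apply/setP => z; rewrite !inE; case: (eqVneq z w) => [->|] /=; first by rewrite (negPf wA).
  by case: (z \in A); rewrite ?andbF.
Qed.

Lemma face_in_facet (n : nat) (D : {set {set 'I_n}}) (A : {set 'I_n}) :
  A \in D -> exists2 F, F \in facets D & A \subset F.
Proof.
move=> AD; have [F /maxsetP [FD Fmax] AF] := maxset_exists (P := fun X => X \in D) AD.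
exists F => //; rewrite /facets inE FD /=; apply/forall_inP => G GD.
by apply/implyP => FG; apply/eqP; apply: Fmax.
Qed.

Lemma facets_incomp (n : nat) (D : {set {set 'I_n}}) (F G : {set 'I_n}) :
  F \in facets D -> G \in facets D -> F \subset G -> G = F.
Proof.
rewrite /facets !inE => /andP [_ /forall_inP H] /andP [GD _] FG.
by apply/eqP; apply: (implyP (H G GD)).
Qed.

Lemma qt_claim (n : nat) (D : {set {set 'I_n}}) (s : seq {set 'I_n}) :
  (forall F, F \in s <-> F \in facets D) ->
  (forall i, (i < size s)%N -> is_leaf (gen_facets [set F in take i.+1 s]) (nth set0 s i)) ->
  forall t, (t <= size s)%N -> forall U' : {set 'I_n}, U' != set0 ->
  (forall u, u \in U' -> exists2 F, F \in take t s & u \in F) ->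
  exists2 w, w \in U' & exists2 F0, F0 \in take t s &
    forall A : {set 'I_n}, A \subset U' -> w \in A ->
      (exists2 F, F \in take t s & A \subset F) -> A \subset F0.
Proof.
move=> hs hl; elim=> [|t IH] ht U' nU' cov.
  by case/set0Pn: nU' => u /cov [F]; rewrite take0.
have ts : (t < size s)%N by [].
have leaf := hl t ts; rewrite (take_nth set0 ts) in leaf cov *.
set Fc := nth set0 s t in leaf cov *.
have FcS : Fc \in s by apply: mem_nth.
have memR : forall F, (F \in rcons (take t s) Fc) = (F == Fc) || (F \in take t s).
  by move=> F; rewrite mem_rcons in_cons.
have inS : forall F, F \in rcons (take t s) Fc -> F \in s.
  by move=> F; rewrite memR => /orP [/eqP ->|/mem_take].
have inGen : forall F, F \in rcons (take t s) Fc ->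
    F \in gen_facets [set F in rcons (take t s) Fc].
  move=> F hF; rewrite /gen_facets !inE hF /=; apply/forall_inP => G; rewrite inE => hG.
  apply/implyP => FG; apply/eqP; apply: (facets_incomp (D := D)) => //.
    by apply/hs; apply: inS.
  by apply/hs; apply: inS.
have genIn : forall F, F \in gen_facets [set F in rcons (take t s) Fc] ->
    F \in rcons (take t s) Fc.
  by move=> F; rewrite /gen_facets !inE => /andP [].
have IH' := IH (ltnW ts).
case: (boolP [exists u in U', u \in Fc]) => [/exists_inP [u0 u0U u0F]|/exists_inPn H].
  case: leaf => [FcG [Geq|[G [GG GnF] Gcond]]].
    exists u0 => //; exists Fc; first by rewrite memR eqxx.
    move=> A _ _ [F /inGen]; rewrite Geq => /set1P -> //.
  case: (boolP [exists w in U', (w \in Fc) && (w \notin G)]).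
    move=> /exists_inP [w wU /andP [wF wG]].
    exists w => //; exists Fc; first by rewrite memR eqxx.
    move=> A _ wA [F hF AF]; case: (eqVneq F Fc) => [<- //|FnFc].
    have := Gcond F (inGen _ hF) FnFc => /subsetP /(_ w).
    rewrite !inE (subsetP AF _ wA) wF (negPf wG) /= => /(_ isT).
    by [].
  move=> /exists_inPn HG.
  have GinT : G \in take t s.
    by move: (genIn _ GG); rewrite memR (negPf GnF).
  have UG : forall u, u \in U' -> u \in Fc -> u \in G.
    by move=> u uU uF; move: (HG u uU); rewrite uF /= negbK.
  have cov' : forall u, u \in U' -> exists2 F, F \in take t s & u \in F.
    move=> u uU; have [F hF uF] := cov u uU.
    move: hF; rewrite memR => /orP [/eqP eF|hF]; last by exists F.
    by exists G => //; apply: UG => //; rewrite -eF.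
  have [w wU [F0 hF0 hw]] := IH' U' nU' cov'.
  exists w => //; exists F0; first by rewrite memR hF0 orbT.
  move=> A AU wA [F]; rewrite memR => /orP [/eqP -> AF|hF AF]; apply: hw => //.
    exists G => //; apply/subsetP => z zA; apply: UG; [exact: (subsetP AU) | exact: (subsetP AF)].
  by exists F.
have [w wU [F0 hF0 hw]] : exists2 w, w \in U' & exists2 F0, F0 \in take t s &
    forall A : {set 'I_n}, A \subset U' -> w \in A ->
      (exists2 F, F \in take t s & A \subset F) -> A \subset F0.
  apply: IH' => // u uU; have [F] := cov u uU; rewrite memR => /orP [/eqP -> uF|hF uF].
    by move: (H u uU); rewrite uF.
  by exists F.
exists w => //; exists F0; first by rewrite memR hF0 orbT.
move=> A AU wA [F]; rewrite memR => /orP [/eqP -> AF|hF AF]; last by apply: hw => //; exists F.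
by move: (H w wU); rewrite (subsetP AF _ wA).
Qed.

Lemma qt_chordal (n : nat) (D : {set {set 'I_n}}) :
  simplicial_complex D -> quasi_tree D ->
  forall U' : {set 'I_n}, U' \subset setT -> U' != set0 ->
  exists2 w, w \in U' & simpl (fun A => A \in D) U' w.
Proof.
move=> [hsing hdown] [s [us hs hl]] U' _ nU'.
have inF : forall A, A \in D -> exists2 F, F \in take (size s) s & A \subset F.
  move=> A AD; have [F Ff AF] := face_in_facet AD.
  by exists F => //; rewrite take_size; apply/hs.
have [w wU [F0 hF0 hw]] := qt_claim hs hl (leqnn _) nU'
  (fun u uU => match inF _ (hsing u) with ex_intro2 F hF uF =>
      ex_intro2 _ _ F hF (subsetP uF u (set11 u)) end).
exists w => // A B AU BU wA wB AD BD.
have F0D : F0 \in D.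
  by move: hF0; rewrite take_size => /hs; rewrite /facets inE => /andP [].
apply: (hdown F0) => //; rewrite subUset; apply/andP; split; apply: hw => //; exact: inF.
Qed.

Import GRing.Theory.
Local Open Scope ring_scope.

Lemma ideal0 (R : comNzRingType) (G : seq R) : in_ideal G 0.
Proof.
exists (nseq (size G) 0); rewrite size_nseq; split => //.
by rewrite big1 // => j _; rewrite nth_nseq if_same mul0r.
Qed.

Lemma ideal_add (R : comNzRingType) (G : seq R) p q :
  in_ideal G p -> in_ideal G q -> in_ideal G (p + q).
Proof.
move=> [c1 [s1 ->]] [c2 [s2 ->]].
exists (mkseq (fun j => c1`_j + c2`_j) (size G)); rewrite size_mkseq; split => //.
rewrite -big_split /=; apply: eq_bigr => j _.
by rewrite nth_mkseq // mulrDl.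
Qed.

Lemma ideal_mull (R : comNzRingType) (G : seq R) r p :
  in_ideal G p -> in_ideal G (r * p).
Proof.
move=> [c [sc ->]].
exists (mkseq (fun j => r * c`_j) (size G)); rewrite size_mkseq; split => //.
rewrite mulr_sumr; apply: eq_bigr => j _.
by rewrite nth_mkseq // mulrA.
Qed.

Lemma ideal_sum (R : comNzRingType) (G : seq R) m (F : 'I_m -> R) :
  (forall j, in_ideal G (F j)) -> in_ideal G (\sum_(j < m) F j).
Proof.
move=> h; elim/big_ind: _ => //; [exact: ideal0 | exact: ideal_add].
Qed.

Lemma ideal_gen (R : comNzRingType) (G : seq R) x : x \in G -> in_ideal G x.
Proof.
move=> xG; set j := index x G.
have jG : (j < size G)%N by rewrite index_mem.
exists (mkseq (fun i => (i == j)%:R) (size G)); rewrite size_mkseq; split => //.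
rewrite (bigD1 (Ordinal jG)) //= big1 ?addr0.
  by rewrite nth_mkseq // eqxx mul1r nth_index.
move=> i /eqP ij; have ne : (nat_of_ord i == j) = false.
  by apply/negbTE/eqP => e; apply: ij; apply: val_inj.
by rewrite nth_mkseq // ne mul0r.
Qed.

Lemma ideal_trans (R : comNzRingType) (G G' : seq R) g a :
  in_ideal G g -> (forall x, x \in G -> in_ideal G' (x * a)) -> in_ideal G' (g * a).
Proof.
move=> [c [sc ->]] h; rewrite mulr_suml; apply: ideal_sum => j.
by rewrite -mulrA; apply: ideal_mull; apply: h; apply: mem_nth.
Qed.

Definition sigt (K : fieldType) (n : nat) (V : seq 'I_n) : n.-tuple {mpoly K[n]} :=
  [tuple (if i \in V then 0 else 'X_i) | i < n].

Lemma sigX (K : fieldType) (n : nat) (V : seq 'I_n) (i : 'I_n) :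
  'X_i \mPo sigt K V = if i \in V then 0 else 'X_i.
Proof. by rewrite comp_mpolyXU -(tnth_nth 0) tnth_mktuple. Qed.

Lemma Q_all (K : fieldType) (n : nat) (V : seq 'I_n) (g : {mpoly K[n]}) :
  in_ideal [seq 'X_j | j <- V] (g - (g \mPo sigt K V)).
Proof.
have QM : forall a b : {mpoly K[n]}, in_ideal [seq 'X_j | j <- V] (a - (a \mPo sigt K V)) -> in_ideal [seq 'X_j | j <- V] (b - (b \mPo sigt K V)) ->
    in_ideal [seq 'X_j | j <- V] (a * b - ((a * b) \mPo sigt K V)).
  move=> a b ha hb; rewrite rmorphM.
  have -> : a * b - (a \mPo sigt K V) * (b \mPo sigt K V) = a * (b - (b \mPo sigt K V)) + (a - (a \mPo sigt K V)) * (b \mPo sigt K V).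
    by rewrite mulrBr mulrBl addrA subrK.
  by apply: ideal_add; [apply: ideal_mull | rewrite mulrC; apply: ideal_mull].
have Q1 : in_ideal [seq 'X_j | j <- V] (1 - (1 \mPo sigt K V)) by rewrite rmorph1 subrr; apply: ideal0.
have QX : forall i, in_ideal [seq 'X_j | j <- V] ('X_i - ('X_i \mPo sigt K V)).
  move=> i; rewrite sigX; case: ifP => iV.
    by rewrite subr0; apply: ideal_gen; apply: map_f.
  by rewrite subrr; apply: ideal0.
have QXm : forall m, in_ideal [seq 'X_j | j <- V] ('X_[m] - ('X_[m] \mPo sigt K V)).
  move=> m; rewrite mpolyXE_id.
  apply: (big_ind (fun x => in_ideal [seq 'X_j | j <- V] (x - (x \mPo sigt K V)))) => //.
  move=> i _; elim: (m i) => [|k IH]; first by rewrite expr0.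
  by rewrite exprS; apply: QM.
elim/mpolyind: g => [|c m p _ _ IH].
  by rewrite comp_mpoly0 subr0; apply: ideal0.
rewrite comp_mpolyD opprD addrACA; apply: ideal_add => //.
rewrite comp_mpolyZ -scalerBr -mul_mpolyC; apply: ideal_mull; exact: QXm.
Qed.

Lemma xmon_split (K : fieldType) (n : nat) (B C : {set 'I_n}) :
  C \subset B -> xmon K B = xmon K C * xmon K (B :\: C).
Proof. by move=> CB; rewrite /xmon (big_setID C) /= (setIidPr CB). Qed.

Lemma xmon_U1 (K : fieldType) (n : nat) (A : {set 'I_n}) k :
  k \notin A -> 'X_k * xmon K A = xmon K (k |: A).
Proof. by move=> kA; rewrite /xmon big_setU1. Qed.

Lemma X_neq0 (K : fieldType) (n : nat) (i : 'I_n) : ('X_i : {mpoly K[n]}) != 0.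
Proof.
apply/eqP => e; have := mevalXU (fun _ => (1 : K)) i.
by rewrite e raddf0 => /esym/eqP; rewrite oner_eq0.
Qed.

Lemma xmon_neq0 (K : fieldType) (n : nat) (A : {set 'I_n}) : xmon K A != 0.
Proof. by apply/prodf_neq0 => i _; apply: X_neq0. Qed.

Lemma colon (K : fieldType) (n : nat) (P : seq {set 'I_n}) (A : {set 'I_n}) (V : seq 'I_n) :
  (forall k, k \in V -> k \notin A /\ exists2 C, C \in P & C \subset k |: A) ->
  (forall C, C \in P -> exists2 k, k \in V & k \in C) ->
  forall g, in_ideal [seq xmon K C | C <- P] (g * xmon K A) <-> in_ideal [seq 'X_j | j <- V] g.
Proof.
move=> hV hP g; split.
  move=> [c [sc e]].
  have hA : xmon K A \mPo sigt K V = xmon K A.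
    rewrite /xmon rmorph_prod; apply: eq_bigr => i iA; rewrite /= sigX; case: ifP => // iV.
    by have [/negP] := hV i iV.
  have s0 : (g \mPo sigt K V) * xmon K A = 0.
    rewrite -hA -rmorphM e rmorph_sum big1 // => j _; rewrite rmorphM.
    have : [seq xmon K C | C <- P]`_j \in [seq xmon K C | C <- P] by apply: mem_nth.
    case/mapP => C hC ->; have [k kV kC] := hP C hC.
    by rewrite /xmon rmorph_prod (big_setD1 k kC) /= sigX kV mul0r mulr0.
  move/eqP: s0; rewrite mulf_eq0 (negPf (xmon_neq0 K A)) orbF => /eqP s0.
  by have := Q_all V g; rewrite s0 subr0.
move=> hg; apply: (ideal_trans hg) => x /mapP [k kV ->].
have [kA [C hC CkA]] := hV k kV.
rewrite xmon_U1 // (xmon_split K CkA) mulrC; apply: ideal_mull; apply: ideal_gen; exact: map_f.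
Qed.

Theorem theorem4p1 (K : fieldType) (n d l : nat) (D : {set {set 'I_n}}) :
  simplicial_complex D ->
  quasi_tree D ->
  max_face_card D = d ->
  (l < d)%N ->
  (* the minimal monomial generators of I are the x_F, F an (l+1)-subset of
     [n] with F not in D; I has linear quotients: some ordering works *)
  exists s : seq {set 'I_n},
    [/\ uniq s,
        (forall F : {set 'I_n}, F \in s <-> (#|F| = l.+1 /\ F \notin D)) &
        linear_quotients_order [seq xmon K F | F <- s]].
Proof.
move=> sc qt _ _.
have dcl : dclosed (fun A => A \in D) by move=> A B AD BA; exact: sc.2 A B AD BA.
have [s [us ms gs]] := exists_good (U := setT) (P := fun A => A \in D) l.+1 (leqnn _) dcl
  (qt_chordal sc qt).
exists s; split => //.
  move=> F; rewrite ms; split => [[_ h1 h2]|[h1 h2]]; split => //; exact: subsetT.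
move=> i /andP [i0]; rewrite size_map => hi.
set A := nth set0 s i.
exists [seq k <- enum 'I_n | has (fun C => C :\: A == [set k]) (take i s)] => g.
rewrite -map_take (nth_map set0) //; apply: colon.
  move=> k; rewrite mem_filter => /andP [/hasP [C hC /eqP e] _].
  have : k \in C :\: A by rewrite e set11.
  rewrite inE => /andP [kA _]; split => //; exists C => //.
  apply/subsetP => y yC; rewrite !inE; case: (boolP (y \in A)) => yA; rewrite ?orbT //.
  have : y \in C :\: A by rewrite inE yA yC.
  by rewrite e => /set1P ->; rewrite eqxx.
move=> C hC; have [k hk [C' hC' e]] := gs i hi C hC.
exists k; last by move: hk; rewrite inE => /andP [].
by rewrite mem_filter mem_enum andbT; apply/hasP; exists C' => //; apply/eqP.
Qed.
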